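(* For all integers $1\le k\le n$, $\hat E_{k,n}(q)=\hat E_{n+1-k,n}(q)$.
   Context: Place $1,\dots,n$ clockwise on a circle. Distinct $p_1,\dots,p_m$ are in clockwise cyclic order if $(p_2-p_1)\bmod n<\dots<(p_m-p_1)\bmod n$ (residues in $\{0,\dots,n-1\}$). For $\pi\in S_n$ (fixed points regarded as ''counterclockwise loops''), an ordered pair $(i,j)$, $i\ne j$, is aligned if $\pi(j)\ne j$, the entries of $(i,\pi(i),\pi(j),j)$ are pairwise distinct except that possibly $i=\pi(i)$, and the distinct entries in this order are in clockwise cyclic order. An alignment is an unordered pair $\{i,j\}$ with $(i,j)$ or $(j,i)$ aligned; $\mathrm{al}(\pi)$ is their number. A weak excedence of $\pi$ is an $i$ with $\pi(i)\ge i$. $E_{k,n}(q)=\sum q^{k(n-k)-\mathrm{al}(\pi)}$ over $\pi\in S_n$ with exactly $k$ weak excedences, and $\hat E_{k,n}(q)=q^{k-n}E_{k,n}(q)$. *)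

(* Defs.v *)
(* Points 1..n of the circle are encoded as 'I_n (value v <-> point v+1);
   the cyclic-order condition depends only on differences mod n, so the shift is harmless. *)
From mathcomp Require Import all_boot all_order all_algebra all_fingroup.
Set Implicit Arguments. Unset Strict Implicit. Unset Printing Implicit Defensive.

Definition cdiff (n : nat) (p q : 'I_n) : nat := (q + n - p) %% n.

(* distinct p_1,...,p_m in clockwise cyclic order:
   (p_2-p_1) mod n < ... < (p_m-p_1) mod n *)
Definition cw_ordered (n : nat) (s : seq 'I_n) : bool :=
  match s with
  | [::] => true
  | p1 :: rest => uniq s && sorted ltn [seq cdiff p1 p | p <- rest]
  end.

Definition aligned (n : nat) (pi : 'S_n) (i j : 'I_n) : bool :=
  [&& i != j, pi j != j &
      cw_ordered (if pi i == i then [:: i; pi j; j] else [:: i; pi i; pi j; j])].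

Definition al (n : nat) (pi : 'S_n) : nat :=
  #|[set ij : 'I_n * 'I_n | (ij.1 < ij.2) &&
        (aligned pi ij.1 ij.2 || aligned pi ij.2 ij.1)]|.

Definition wex (n : nat) (pi : 'S_n) : nat := #|[set i : 'I_n | i <= pi i]|.

(* Ehat_{k,n}(q) = q^(k-n) * sum_{pi, wex pi = k} q^(k(n-k) - al pi) is a Laurent
   polynomial in q; Ehat_coef n k e is its coefficient of q^e (e : int). *)
Definition Ehat_coef (n k : nat) (e : int) : nat :=
  #|[set pi : 'S_n | (wex pi == k) &&
       ((k%:Z - n%:Z) + ((k * (n - k))%:Z - (al pi)%:Z) == e)%R]|.

(* Main.v *)
Require Import Defs.
From mathcomp Require Import all_boot all_order all_algebra all_fingroup zify.
Set Implicit Arguments. Unset Strict Implicit. Unset Printing Implicit Defensive.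

Definition cd (n a b : nat) := (b + n - a) %% n.
Definition cw3 n a b c := [&& a != b, a != c, b != c & cd n a b < cd n a c].
Definition cw4 n a b c d := [&& a != b, a != c, a != d, b != c, b != d, c != d,
   cd n a b < cd n a c & cd n a c < cd n a d].
Definition Sn n t := t.+1 %% n.

Lemma cdE n a b : a < n -> b < n ->
  (a <= b /\ cd n a b = b - a) \/ (b < a /\ cd n a b = b + n - a).
Proof.
move=> an bn; rewrite /cd; case: (leqP a b) => ab.
  left; split=> //; rewrite -addnBAC // -modnDmr modnn addn0 modn_small //; lia.
right; split=> //; rewrite modn_small //; lia.
Qed.
Lemma SE n t : t < n -> (t.+1 < n /\ Sn n t = t.+1) \/ (t.+1 = n /\ Sn n t = 0).
Proof.
move=> tn; rewrite /Sn; case: (ltnP t.+1 n) => h.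
  by left; rewrite modn_small.
have e: t.+1 = n by lia.
by right; rewrite e modnn.
Qed.
Lemma S_lt n t : 0 < n -> Sn n t < n. Proof. by move=> ?; rewrite /Sn ltn_mod. Qed.
Lemma cd_lt n a b : 0 < n -> cd n a b < n. Proof. by move=> ?; rewrite /cd ltn_mod. Qed.

Lemma cd0 n b : b < n -> cd n 0 b = b.
Proof. by move=> bn; rewrite /cd subn0 -modnDmr modnn addn0 modn_small. Qed.

Lemma key0 n y z w : 0 < n -> y < n -> z < n -> w < n -> (0 == w) = (y == z) ->
  [&& 0 != w, z != w & (if y == 0 then cw3 n 0 z w else cw4 n 0 y z w)] =
  [&& z != y, 0 != Sn n y & (if w == Sn n z then cw3 n (Sn n z) 0 (Sn n y)
                             else cw4 n (Sn n z) w 0 (Sn n y))].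
Proof.
move=> n0 yn zn wn xw.
rewrite /cw3 /cw4 !cd0 //.
have := S_lt y n0; have := S_lt z n0.
have [[Hy1 Hy2]|[Hy1 Hy2]] := SE yn; rewrite Hy2;
have [[Hz1 Hz2]|[Hz1 Hz2]] := SE zn; rewrite Hz2 => szn syn.
- have := cdE szn n0; have := cdE szn syn; have := cdE szn wn.
  case: ifP => e1; case: ifP => e2; lia.
- rewrite !cd0 //; case: ifP => e1; case: ifP => e2; lia.
- have := cdE szn n0; have := cdE szn syn; have := cdE szn wn.
  case: ifP => e1; case: ifP => e2; lia.
- rewrite !cd0 //; case: ifP => e1; case: ifP => e2; lia.
Qed.

Lemma cd_sh n t a b : t < n -> a < n -> b < n -> cd n (cd n t a) (cd n t b) = cd n a b.
Proof.
move=> tn an bn; have n0 : 0 < n by lia.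
have := cdE tn an; have := cdE tn bn; have := cdE an bn.
have := cdE (cd_lt t a n0) (cd_lt t b n0).
lia.
Qed.
Lemma cd_inj n t a b : t < n -> a < n -> b < n -> (cd n t a == cd n t b) = (a == b).
Proof. move=> tn an bn; have := cdE tn an; have := cdE tn bn; lia. Qed.
Lemma cdxx n t : t < n -> cd n t t = 0.
Proof. by move=> tn; have := cdE tn tn; lia. Qed.
Lemma S_sh n t y : t < n -> y < n -> cd n t (Sn n y) = Sn n (cd n t y).
Proof.
move=> tn yn; have n0 : 0 < n by lia.
have := cdE tn yn; have := SE yn; have := cdE tn (S_lt y n0).
have := SE (cd_lt t y n0). lia.
Qed.
Lemma cw3_sh n t a b c : t < n -> a < n -> b < n -> c < n ->
  cw3 n (cd n t a) (cd n t b) (cd n t c) = cw3 n a b c.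
Proof. by move=> *; rewrite /cw3 !cd_inj // !cd_sh. Qed.
Lemma cw4_sh n t a b c d : t < n -> a < n -> b < n -> c < n -> d < n ->
  cw4 n (cd n t a) (cd n t b) (cd n t c) (cd n t d) = cw4 n a b c d.
Proof. by move=> *; rewrite /cw4 !cd_inj // !cd_sh. Qed.

Lemma key n x y z w : x < n -> y < n -> z < n -> w < n -> (x == w) = (y == z) ->
  [&& x != w, z != w & (if y == x then cw3 n x z w else cw4 n x y z w)] =
  [&& z != y, x != Sn n y & (if w == Sn n z then cw3 n (Sn n z) x (Sn n y)
                             else cw4 n (Sn n z) w x (Sn n y))].
Proof.
move=> xn yn zn wn xw; have n0 : 0 < n by lia.
have := key0 n0 (cd_lt x y n0) (cd_lt x z n0) (cd_lt x w n0).
rewrite -(cdxx xn) -!S_sh // !cd_inj // ?S_lt // cw3_sh ?S_lt // cw4_sh ?S_lt //.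
rewrite cw3_sh ?S_lt // cw4_sh ?S_lt //.
by apply.
Qed.

Lemma cw_3 n (a b c : 'I_n) : cw_ordered [:: a; b; c] = cw3 n a b c.
Proof.
rewrite /cw_ordered /cw3 /= !inE !negb_or -!val_eqE /=.
by rewrite /cdiff /cd !andbT -!andbA.
Qed.
Lemma cw_4 n (a b c d : 'I_n) : cw_ordered [:: a; b; c; d] = cw4 n a b c d.
Proof.
rewrite /cw_ordered /cw4 /= !inE !negb_or -!val_eqE /=.
by rewrite /cdiff /cd !andbT -!andbA.
Qed.

Lemma alignedE n (pi : 'S_n) i j : aligned pi i j =
  [&& val i != val j, val (pi j) != val j &
     if val (pi i) == val i then cw3 n i (pi j) j else cw4 n i (pi i) (pi j) j].
Proof. by rewrite /aligned -!val_eqE /=; case: ifP; rewrite ?cw_3 ?cw_4. Qed.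

Definition Sp n : 'S_n := perm (@ordS_inj n).
Definition phi n (pi : 'S_n) : 'S_n := ((pi * Sp n)^-1)%g.

Lemma phi_g n (pi : 'S_n) i : phi pi ((pi * Sp n)%g i) = i.
Proof. by rewrite /phi permK. Qed.
Lemma val_g n (pi : 'S_n) i : val ((pi * Sp n)%g i) = Sn n (pi i).
Proof. by rewrite permM permE. Qed.

Lemma aligned_phi n (pi : 'S_n) i j :
  aligned (phi pi) ((pi * Sp n)%g j) ((pi * Sp n)%g i) = aligned pi i j.
Proof.
rewrite alignedE.
have e1 : (val ((pi * Sp n)%g j) == val ((pi * Sp n)%g i)) = (val (pi j) == val (pi i)).
  by apply/eqP/eqP => [/val_inj/perm_inj -> | /val_inj H] //; rewrite !permM H.
rewrite e1 !phi_g !val_g alignedE.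
symmetry; apply: key; rewrite ?ltn_ord //.
by apply/eqP/eqP => [/val_inj -> | /val_inj/perm_inj ->].
Qed.

Definition Dset n (pi : 'S_n) := [set ij : 'I_n * 'I_n | (ij.1 != ij.2) &&
   (aligned pi ij.1 ij.2 || aligned pi ij.2 ij.1)].

Lemma al2 n (pi : 'S_n) : #|Dset pi| = (al pi).*2.
Proof.
set A := [set ij : 'I_n * 'I_n | (ij.1 < ij.2) &&
        (aligned pi ij.1 ij.2 || aligned pi ij.2 ij.1)].
set B := [set ij : 'I_n * 'I_n | (ij.2 < ij.1) &&
        (aligned pi ij.1 ij.2 || aligned pi ij.2 ij.1)].
have eD : Dset pi = A :|: B.
  apply/setP => -[a b]; rewrite !inE /=.
  have -> : (a != b) = ((a:nat) < b) || (b < a) by exact: neq_ltn.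
  by rewrite andb_orl.
have eI : A :&: B = set0.
  apply/setP => -[a b]; rewrite !inE /=.
  case ab: (a < b) => //=; case ba: (b < a) => //=; lia.
have eB : B = [set (ij.2, ij.1) | ij in A].
  apply/setP => -[a b]; rewrite inE; apply/idP/imsetP.
    by move=> H; exists (b, a); rewrite // inE /= orbC.
  by case=> -[c d]; rewrite inE /= => H [-> ->]; rewrite orbC.
have cB : #|B| = #|A|.
  rewrite eB card_imset //.
  by move=> [a b] [c d] /= [-> ->].
have := cardsUI A B; rewrite -eD eI cards0 addn0 cB -addnn => ->.
by [].
Qed.

Lemma al_phi n (pi : 'S_n) : al (phi pi) = al pi.
Proof.
apply/eqP; rewrite -(eqn_pmul2l (isT : 0 < 2)) !mul2n -!al2; apply/eqP.
set G := fun ij : 'I_n * 'I_n => ((pi * Sp n)%g ij.1, (pi * Sp n)%g ij.2).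
have Ginj : injective G.
  by move=> [a b] [c d]; rewrite /G /= => -[/perm_inj -> /perm_inj ->].
rewrite -(card_preimset _ Ginj); apply: eq_card => -[a b].
rewrite !inE /= !aligned_phi (inj_eq perm_inj).
by rewrite orbC.
Qed.

Lemma wex_phi n (pi : 'S_n) : 0 < n -> wex (phi pi) = n.+1 - wex pi.
Proof.
move=> n0.
have ln : n.-1 < n by lia.
set W := [set y : 'I_n | Sn n (pi y) <= y].
set X := [set y : 'I_n | y <= pi y].
have eW : wex (phi pi) = #|W|.
  rewrite /wex -(card_preimset _ (@perm_inj _ (pi * Sp n)%g)).
  apply: eq_card => y; rewrite !inE phi_g val_g //.
have eU : W :|: X = setT.
  apply/setP => y; rewrite !inE.
  have := SE (ltn_ord (pi y)); lia.
have eI : W :&: X = pi @^-1: [set Ordinal ln].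
  apply/setP => y; rewrite !inE -val_eqE /=.
  have := SE (ltn_ord (pi y)); have := ltn_ord (pi y); have := ltn_ord y; lia.
have := cardsUI W X; rewrite eU eI card_preimset ?cards1 ?cardsT ?card_ord; last exact: perm_inj.
rewrite eW /wex -/X; lia.
Qed.

Lemma phi_inj n : injective (@phi n).
Proof. by move=> a b; rewrite /phi => /invg_inj /mulIg. Qed.

Lemma exprZ (n k a : nat) : 1 <= k <= n ->
  (((n.+1 - k)%:Z - n%:Z) + (((n.+1 - k) * (n - (n.+1 - k)))%:Z - a%:Z) =
   (k%:Z - n%:Z) + ((k * (n - k))%:Z - a%:Z))%R.
Proof.
move=> /andP [k1 kn].
have [k0 ek] : exists k0, k = k0.+1 by exists k.-1; lia.
have [m en] : exists m, n = k0.+1 + m by exists (n - k); lia.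
subst.
have -> : (k0.+1 + m).+1 - k0.+1 = m.+1 by lia.
have -> : k0.+1 + m - m.+1 = k0 by lia.
have -> : k0.+1 + m - k0.+1 = m by lia.
nia.
Qed.

Lemma le_main n k e : 1 <= k <= n -> Ehat_coef n k e <= Ehat_coef n (n.+1 - k) e.
Proof.
move=> hk; have n0 : 0 < n by lia.
rewrite /Ehat_coef -(card_imset _ (@phi_inj n)); apply: subset_leq_card.
apply/subsetP => s /imsetP [pi]; rewrite inE => /andP [/eqP wk /eqP ex] ->.
rewrite inE wex_phi // wk eqxx /= al_phi -ex exprZ //.
Qed.

Theorem mainTheorem10 (n k : nat) : 1 <= k <= n ->
  forall e : int, Ehat_coef n k e = Ehat_coef n (n.+1 - k) e.
Proof.
move=> hk e; apply/eqP; rewrite eqn_leq le_main //=.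
have hk' : 1 <= n.+1 - k <= n by lia.
have := le_main e hk'; have -> : n.+1 - (n.+1 - k) = k by lia.
by [].
Qed.
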